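(* Let $P$ be a quasi-lattice ordered subsemigroup of a group $Q$ and $\Lambda$ an $(r,d)$-proper topological $P$-graph, with path space $\Omega$, shift $T$ and Toeplitz groupoid $G(\Omega,P,T)$. Then the boundary path space $\partial\Omega$ is a closed invariant subset of $\Omega$ with respect to $G(\Omega,P,T)$.
   Context: Quasi-lattice ordered: $P\subset Q$ subsemigroup with $P\cap P^{-1}=\{e\}$ such that two elements with a common upper bound (for $m\le n$ iff $n=mp$, $p\in P$) have a least upper bound. Topological $P$-graph: small category $\Lambda$, vertices $\Lambda^{(0)}\subset\Lambda$, $r,s:\Lambda\to\Lambda^{(0)}$, composition on pairs with $s(\lambda)=r(\mu)$; $\Lambda,\Lambda^{(0)}$ locally compact Hausdorff, $r,s$ continuous, $s$ a local homeomorphism, inclusion continuous, composition continuous and open; continuous multiplicative $d:\Lambda\to P$, $e$ on vertices, with composition $\Lambda^m*\Lambda^n\to\Lambda^{mn}$ a homeomorphism ($\Lambda^m=d^{-1}(m)$). $(r,d)$-proper: $(r,d):\Lambda\to\Lambda^{(0)}\times P$ proper. $\mu\le\lambda$ iff $\lambda=\mu\nu$. $\Omega$: nonempty closed hereditary directed subsets of $\Lambda$ with the relative Fell topology. $A\cdot n=\{\nu:\exists\mu\in\Lambda^n,\mu\nu\in A\}$. $G(\Omega,P,T)=\{(A,q,B)\in\Omega\times Q\times\Omega:\exists m,n\in P,\ q=mn^{-1},\ A\cdot m=B\cdot n\neq\emptyset\}$ with $(A,q,B)(B,q',C)=(A,qq',C)$, unit space $\Omega$; a subset $Y\subset\Omega$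 is invariant if $(A,q,B)\in G(\Omega,P,T)$ and $B\in Y$ imply $A\in Y$. $E\subset\Lambda$ is exhaustive if for each $\lambda$ with $r(\lambda)\in r(E)$ there is $\mu\in E$ such that $\lambda,\mu$ have a common upper bound; $\lambda\in A$ is extendable in $A$ if for every compact exhaustive $E$ with $r(E)$ a neighborhood of $s(\lambda)$ some $\mu\in E$ has $\lambda\mu\in A$; $\partial\Omega$ is the set of $A\in\Omega$ all of whose elements are extendable in $A$. *)

(* Defs.v *)
From HB Require Import structures.
From mathcomp Require Import all_boot all_order all_algebra.
From mathcomp Require Import all_classical all_reals all_analysis.
Set Implicit Arguments. Unset Strict Implicit. Unset Printing Implicit Defensive.
Local Open Scope classical_set_scope.

Record QGroup := {
  gcar :> Type;
  gmul : gcar -> gcar -> gcar;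
  ginv : gcar -> gcar;
  gone : gcar;
  gmulA : forall x y z, gmul x (gmul y z) = gmul (gmul x y) z;
  gmul1l : forall x, gmul gone x = x;
  gmul1r : forall x, gmul x gone = x;
  gmulVl : forall x, gmul (ginv x) x = gone;
  gmulVr : forall x, gmul x (ginv x) = gone }.
Arguments gmul {q}. Arguments ginv {q}. Arguments gone {q}.

Section QLO.
Variables (Q : QGroup) (P : set Q).

Definition subsemigroup := forall m n, P m -> P n -> P (gmul m n).

Definition qle (m n : Q) := exists2 p, P p & n = gmul m p.

Definition quasi_lattice_ordered :=
  [/\ subsemigroup,
      (forall x, (P x /\ P (ginv x)) <-> x = gone) &
      forall m n, P m -> P n ->
        (exists2 u, P u & qle m u /\ qle n u) ->
        exists2 l, P l & [/\ qle m l, qle n l &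
           forall u, P u -> qle m u -> qle n u -> qle l u]].
End QLO.

Record TopPGraph (Q : QGroup) (P : set Q) := {
  V : topologicalType;
  L : topologicalType;
  vinc : V -> L;
  rg : L -> V;
  sc : L -> V;
  comp : L -> L -> L;             (* composition, meaningful when sc x = rg y *)
  deg : L -> Q;
  vinc_inj : injective vinc;
  rg_vinc : forall v, rg (vinc v) = v;
  sc_vinc : forall v, sc (vinc v) = v;
  comp_idl : forall x, comp (vinc (rg x)) x = x;
  comp_idr : forall x, comp x (vinc (sc x)) = x;
  rg_comp : forall x y, sc x = rg y -> rg (comp x y) = rg x;
  sc_comp : forall x y, sc x = rg y -> sc (comp x y) = sc y;
  compA : forall x y z, sc x = rg y -> sc y = rg z ->
     comp x (comp y z) = comp (comp x y) z;
  V_hausdorff : hausdorff_space V;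
  V_lc : locally_compact [set: V];
  L_hausdorff : hausdorff_space L;
  L_lc : locally_compact [set: L];
  rg_cont : continuous rg;
  sc_cont : continuous sc;
  sc_lochomeo : forall x : L, exists U : set L,
     [/\ open U, U x, {in U &, injective sc} &
         forall W : set L, open W -> W `<=` U -> open (sc @` W)];
  vinc_cont : continuous vinc;
  comp_cont : {within [set p : L * L | sc p.1 = rg p.2],
                 continuous (fun p : L * L => comp p.1 p.2)};
  comp_open : forall W : set (L * L), open W ->
     open ((fun p : L * L => comp p.1 p.2) @`
            (W `&` [set p | sc p.1 = rg p.2]));
  (* degree functor into P (P discrete): continuous = locally constant *)
  deg_P : forall x, P (deg x);
  deg_cont : forall p, open (deg @^-1` [set p]);
  deg_comp : forall x y, sc x = rg y -> deg (comp x y) = gmul (deg x) (deg y);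
  deg_vinc : forall v, deg (vinc v) = gone;
  (* unique factorisation: Lambda^m * Lambda^n -> Lambda^{mn} is a homeomorphism *)
  factor_bij : forall m n, P m -> P n -> forall x, deg x = gmul m n ->
     exists! yz : L * L, [/\ deg yz.1 = m, deg yz.2 = n, sc yz.1 = rg yz.2 &
                              comp yz.1 yz.2 = x];
  factor_homeo : forall m n, P m -> P n ->
     exists f : L -> L * L,
       {within deg @^-1` [set gmul m n], continuous f} /\
       forall x, deg x = gmul m n ->
         [/\ deg (f x).1 = m, deg (f x).2 = n, sc (f x).1 = rg (f x).2 &
             comp (f x).1 (f x).2 = x] }.

Section PathSpace.
Variables (Q : QGroup) (P : set Q) (G : TopPGraph P).
Local Notation L := (L G).
Local Notation rg := (@rg _ _ G).
Local Notation sc := (@sc _ _ G).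
Local Notation comp := (@comp _ _ G).
Local Notation deg := (@deg _ _ G).

Definition ple (mu lam : L) := exists nu, sc mu = rg nu /\ lam = comp mu nu.

Definition hereditary (A : set L) := forall lam mu, A lam -> ple mu lam -> A mu.
Definition directed (A : set L) :=
  forall x y, A x -> A y -> exists2 z, A z & ple x z /\ ple y z.

Definition Omega : set (set L) :=
  [set A | A !=set0 /\ closed A /\ hereditary A /\ directed A].

Definition shift (A : set L) (n : Q) : set L :=
  [set nu | exists mu, deg mu = n /\ sc mu = rg nu /\ A (comp mu nu)].

Definition toeplitz_groupoid : set (set L * Q * set L) :=
  [set t | let: (A, q, B) := t in Omega A /\ Omega B /\
     exists m n, [/\ P m, P n, q = gmul m (ginv n),
                     shift A m = shift B n & shift A m !=set0]].

Definition G_invariant (Y : set (set L)) :=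
  forall A q B, toeplitz_groupoid (A, q, B) -> Y B -> Y A.

(** Relative Fell topology on Omega: basic open sets are finite intersections
    of the subbasic sets {C | C cap K = empty} (K compact) and
    {C | C cap U nonempty} (U open). *)
Definition fell_basic (Ks Us : seq (set L)) (C : set L) :=
  (forall K, K \in Ks -> C `&` K = set0) /\
  (forall U, U \in Us -> C `&` U !=set0).

Definition closed_in_Omega (Y : set (set L)) :=
  Y `<=` Omega /\
  forall A, Omega A -> ~ Y A ->
    exists Ks Us : seq (set L),
      [/\ forall K, K \in Ks -> compact K,
          forall U, U \in Us -> open U,
          fell_basic Ks Us A &
          forall C, Omega C -> fell_basic Ks Us C -> ~ Y C].

Definition exhaustive (E : set L) :=
  forall lam, (rg @` E) (rg lam) ->
    exists2 mu, E mu & exists z, ple lam z /\ ple mu z.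

Definition extendable (A : set L) (lam : L) :=
  forall E : set L, compact E -> exhaustive E -> nbhs (sc lam) (rg @` E) ->
    exists2 mu, E mu & sc lam = rg mu /\ A (comp lam mu).

Definition boundary_paths : set (set L) :=
  [set A | Omega A /\ forall lam, A lam -> extendable A lam].
End PathSpace.

(** (r,d)-proper: (r,d) : Lambda -> Lambda^(0) x P proper, P discrete;
    i.e. preimages of K x {p} (K compact) are compact. *)
Definition rd_proper (Q : QGroup) (P : set Q) (G : TopPGraph P) :=
  forall (K : set (V G)) (p : Q), compact K -> P p ->
    compact ((@rg _ _ G) @^-1` K `&` (@deg _ _ G) @^-1` [set p]).

Arguments boundary_paths {Q P} G.
Arguments Omega {Q P} G.
Arguments closed_in_Omega {Q P} G Y.
Arguments G_invariant {Q P} G Y.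
Arguments toeplitz_groupoid {Q P} G.

(* Main.v *)
From HB Require Import structures.
Require Import Defs.
From mathcomp Require Import all_boot all_classical all_analysis.
Set Implicit Arguments. Unset Strict Implicit. Unset Printing Implicit Defensive.
Local Open Scope classical_set_scope.

Definition wcont (X Y : topologicalType) (Z : set X) (f : X -> Y) :=
  forall x, Z x -> f @ within Z (nbhs x) --> f x.

Lemma wcontE (X Y : topologicalType) (Z : set X) (f : X -> Y) :
  {within Z, continuous f} <-> wcont Z f.
Proof. exact: subspace_continuousP. Qed.

Lemma wcontW (X Y : topologicalType) (Z Z' : set X) (f : X -> Y) :
  Z' `<=` Z -> wcont Z f -> wcont Z' f.
Proof.
move=> sub h x Zx; apply: cvg_trans (h x (sub _ Zx)).
apply: cvg_fmap2; exact: within_subset.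
Qed.

Lemma wcont_cont (X Y : topologicalType) (Z : set X) (f : X -> Y) :
  continuous f -> wcont Z f.
Proof.
move=> h x _; apply: cvg_trans (h x).
apply: cvg_fmap2; exact: cvg_within.
Qed.

Lemma closed_eqW (X Y : topologicalType) (Z : set X) (f g : X -> Y) :
  hausdorff_space Y -> closed Z -> wcont Z f -> wcont Z g ->
  closed [set x | Z x /\ f x = g x].
Proof.
move=> hY cZ cf cg x clx.
have Zx : Z x by apply: cZ; apply: closure_subset clx => y [].
split => //.
have FF : ProperFilter (within [set x | Z x /\ f x = g x] (nbhs x)).
  exact: within_nbhs_proper.
have sub : within [set x | Z x /\ f x = g x] (nbhs x) `=>` within Z (nbhs x).
  by apply: within_subset => y [].
have h1 : f @ within [set x | Z x /\ f x = g x] (nbhs x) --> f x.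
  exact: cvg_trans (cvg_fmap2 sub) (cf x Zx).
have h2 : f @ within [set x | Z x /\ f x = g x] (nbhs x) --> g x.
  apply: cvg_trans (cvg_trans (cvg_fmap2 sub) (cg x Zx)).
  apply: fmap_within_eq => y; rewrite inE => -[]//.
exact: (cvg_unique hY h1 h2).
Qed.

Lemma wcont_comp (X Y W : topologicalType) (A : set X) (B : set Y)
   (f : X -> Y) (g : Y -> W) :
  wcont A f -> wcont B g -> (forall x, A x -> B (f x)) -> wcont A (g \o f).
Proof.
move=> cf cg AB x Ax.
have h0 : forall S, nbhs (f x) [set y | B y -> S y] ->
    within A (nbhs x) (f @^-1` S).
  move=> S hS.
  have h1 : within A (nbhs x) (f @^-1` [set y | B y -> S y]) := cf x Ax _ hS.
  have h2 : within A (nbhs x) A by apply: withinT.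
  have FF : Filter (within A (nbhs x)) by exact: within_filter.
  have h3 := filterI h1 h2.
  apply: (filterS _ (h3 FF)) => z [h5 h4]; exact: h5 (AB _ h4).
have h : f @ within A (nbhs x) --> within B (nbhs (f x)).
  by move=> S; rewrite !nbhs_simpl /= => hS; apply: h0.
exact: cvg_comp h (cg _ (AB _ Ax)).
Qed.


Lemma cont_fst (X Y : topologicalType) : continuous (@fst X Y).
Proof. move=> x; exact: cvg_fst. Qed.
Lemma cont_snd (X Y : topologicalType) : continuous (@snd X Y).
Proof. move=> x; exact: cvg_snd. Qed.

Section Comb.
Variables (Q : QGroup) (P : set Q) (G : TopPGraph P).
Local Notation L := (Defs.L G).
Local Notation rg := (@Defs.rg _ _ G).
Local Notation sc := (@Defs.sc _ _ G).
Local Notation comp := (@Defs.comp _ _ G).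
Local Notation deg := (@Defs.deg _ _ G).
Local Notation ple := (@ple _ _ G).
Implicit Types (x y z a b : L) (A E : set L).

Lemma gcancel (a x y : Q) : gmul a x = gmul a y -> x = y.
Proof.
move=> h; have := congr1 (gmul (ginv a)) h.
by rewrite !gmulA gmulVl !gmul1l.
Qed.

Lemma ple_trans x y z : ple x y -> ple y z -> ple x z.
Proof.
move=> [a [ha ->]] [b [hb ->]].
have e1 : sc (comp x a) = sc a by rewrite sc_comp.
exists (comp a b); split.
  by rewrite rg_comp // -e1.
by rewrite Defs.compA // -e1.
Qed.

Lemma ple_refl x : ple x x.
Proof. by exists (vinc (sc x)); rewrite rg_vinc comp_idr. Qed.

Lemma ple_comp x a : sc x = rg a -> ple x (comp x a).
Proof. by move=> h; exists a. Qed.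

Lemma factor_uniq x a y b : sc x = rg a -> sc y = rg b ->
  comp x a = comp y b -> deg x = deg y -> x = y /\ a = b.
Proof.
move=> hxa hyb e dxy.
have dab : deg a = deg b.
  apply: (@gcancel (deg x)); rewrite -deg_comp // e deg_comp // dxy //.
have [[y0 z0] [[h1 h2 h3 h4] hu]] :=
  Defs.factor_bij (deg_P x) (deg_P a) (deg_comp hxa).
have u1 := hu (x, a) (And4 erefl erefl hxa erefl).
have u2 := hu (y, b) (And4 (esym dxy) (esym dab) hyb (esym e)).
by rewrite u1 in u2; case: u2.
Qed.

Lemma prefix_uniq x y z : ple x z -> ple y z -> deg x = deg y -> x = y.
Proof.
move=> [a [ha ->]] [b [hb e]] d.
by have [] := factor_uniq ha hb e d.
Qed.

Lemma omega_uniq A x y : Omega G A -> A x -> A y -> deg x = deg y -> x = y.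
Proof.
move=> [_ [_ [_ dir]]] Ax Ay d.
have [z _ [h1 h2]] := dir _ _ Ax Ay.
exact: prefix_uniq h1 h2 d.
Qed.


Lemma deg_closed p : closed (deg @^-1` [set p]).
Proof.
move=> x clx.
have nx : nbhs x (deg @^-1` [set deg x]).
  by apply: open_nbhs_nbhs; split => //; exact: deg_cont.
by have [y [/= -> <-]] := clx _ nx.
Qed.

Lemma closed_T1 : closed [set q : L * L | sc q.1 = rg q.2].
Proof.
have -> : [set q : L * L | sc q.1 = rg q.2] =
   [set q | setT q /\ (sc \o fst) q = (rg \o snd) q].
  by apply/seteqP; split => q //= [].
apply: closed_eqW => //.
- exact: V_hausdorff.
- apply: wcont_cont => x; apply: continuous_comp; [exact: cont_fst|exact: sc_cont].
- apply: wcont_cont => x; apply: continuous_comp; [exact: cont_snd|exact: rg_cont].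
Qed.

Lemma lc_nbhs x O : nbhs x O -> exists N, [/\ nbhs x N, compact N & N `<=` O].
Proof.
move=> xO.
have [C] := L_lc (I : setT x); rewrite withinET => xC [cC clC].
have reg := compact_regular (L_hausdorff (t:=G)) cC xC.
have [D xD DO] := reg O xO.
exists (C `&` closure D); split.
- apply: filterI => //; apply: filterS xD; exact: subset_closure.
- apply: compact_closedI => //; exact: closed_closure.
- by move=> y [_ /DO].
Qed.

Lemma compact_K N E : compact N -> compact E ->
  compact ((fun p : L * L => comp p.1 p.2) @` ((N `*` E) `&` [set q | sc q.1 = rg q.2])).
Proof.
move=> cN cE; apply: continuous_compact.
  apply: continuous_subspaceW (comp_cont (t:=G)); by move=> q [].
apply: compact_closedI; [exact: compact_setX | exact: closed_T1].
Qed.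

Lemma bp_closed : closed_in_Omega G (boundary_paths G).
Proof.
split; first by move=> A [].
move=> A OA nbA.
have [lam [Al nel]] : exists lam, A lam /\ ~ extendable A lam.
  apply: contrapT => hn; apply: nbA; split => // lam Al.
  apply: contrapT => hne; apply: hn; by exists lam.
have [E [cE exE nE nomu]] : exists E, [/\ compact E, exhaustive E,
    nbhs (sc lam) (rg @` E) &
    forall mu, E mu -> ~ (sc lam = rg mu /\ A (comp lam mu))].
  apply: contrapT => hn; apply: nel => E cE exE nE.
  apply: contrapT => hm; apply: hn; exists E; split => // mu Emu hh.
  by apply: hm; exists mu.
pose W := interior (rg @` E).
pose O := deg @^-1` [set deg lam] `&` sc @^-1` W.
have nO : nbhs lam O.
  apply: filterI.
    by apply: open_nbhs_nbhs; split => //; exact: deg_cont.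
  apply: (sc_cont (t:=G)); exact: nbhs_interior.
have [N [nN cN NO]] := lc_nbhs nO.
pose K := (fun p : L * L => comp p.1 p.2) @` ((N `*` E) `&` [set q | sc q.1 = rg q.2]).
pose U := interior N.
exists [:: K], [:: U]; split.
- by move=> K0; rewrite mem_seq1 => /eqP ->; exact: compact_K.
- by move=> U0; rewrite mem_seq1 => /eqP ->; exact: open_interior.
- split.
  + move=> K0; rewrite mem_seq1 => /eqP ->.
    apply/seteqP; split => // t [At [[a m] [[Na Em] /= T] e]].
    have Aa : A a.
      by case: OA => _ [_ [her _]]; apply: her At _; rewrite -e; exact: ple_comp.
    have dA : deg a = deg lam by have [] := NO _ Na.
    have ea := omega_uniq OA Aa Al dA.
    by apply: (nomu m Em); rewrite -ea; split => //; rewrite e.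
  + by move=> U0; rewrite mem_seq1 => /eqP ->; exists lam.
- move=> C OC [hK hU] [_ bC].
  have [al [Cal Ual]] := hU U (mem_head _ _).
  have CK := hK K (mem_head _ _).
  have Nal : N al by exact: interior_subset.
  have [_ Wal] := NO _ Nal.
  have [mu Emu [e Cm]] := bC al Cal E cE exE Wal.
  have : (C `&` K) (comp al mu) by split => //; exists (al, mu).
  by rewrite CK.
Qed.

End Comb.

Definition pL (X : topologicalType) (x0 : X) : Type := X.
HB.instance Definition _ (X : topologicalType) (x0 : X) := Topological.copy (@pL X x0) X.
HB.instance Definition _ (X : topologicalType) (x0 : X) := isPointed.Build (@pL X x0) x0.

Lemma fin_cover (X : topologicalType) (x0 : X) (E : set X) (I : choiceType) (D : set I) (f : I -> set X) :
  compact E -> (forall i, D i -> open (f i)) -> E `<=` cover D f ->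
  finite_subset_cover D f E.
Proof.
move=> cE op cov.
have cc : @cover_compact (@pL X x0) E.
  rewrite -compact_cover. exact: cE.
exact: cc.
Qed.

Lemma bigU_mem (I : eqType) (T : Type) (s : seq I) (F : I -> set T) i x :
  i \in s -> F i x -> (\big[setU/set0]_(j <- s) F j) x.
Proof.
elim: s => // j s IH; rewrite inE big_cons => /orP [/eqP <- Fx|/IH h Fx].
  by left.
by right; apply: h.
Qed.

Lemma big_compact (X : topologicalType) (I : Type) (s : seq I) (F : I -> set X) :
  (forall i, compact (F i)) -> compact (\big[setU/set0]_(j <- s) F j).
Proof.
move=> h; elim: s => [|j s IH]; first by rewrite big_nil; exact: compact0.
by rewrite big_cons; apply: compactU.
Qed.

Section Inv.
Variables (Q : QGroup) (P : set Q) (G : TopPGraph P).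
Hypothesis qlo : quasi_lattice_ordered P.
Hypothesis rdp : rd_proper G.
Local Notation L := (Defs.L G).
Local Notation rg := (@Defs.rg _ _ G).
Local Notation sc := (@Defs.sc _ _ G).
Local Notation comp := (@Defs.comp _ _ G).
Local Notation deg := (@Defs.deg _ _ G).
Local Notation ple := (@ple _ _ G).
Implicit Types (x y z : L) (A E : set L).

Lemma Pone : P gone.
Proof. by case: qlo => _ h _; have [] := (h gone).2 erefl. Qed.

Definition Good (a d p q : Q) := [/\ P p, P q, gmul a p = gmul d q &
  forall u, P u -> qle P a u -> qle P d u -> qle P (gmul a p) u].

Definition pq (a d : Q) : Q * Q :=
  match pselect (exists pq : Q * Q, Good a d pq.1 pq.2) with
  | left h => proj1_sig (cid h)
  | right _ => (gone, gone) end.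

Lemma pq_good (a d : Q) : (exists p q, Good a d p q) -> Good a d (pq a d).1 (pq a d).2.
Proof.
move=> [p [q h]]; rewrite /pq; case: pselect => [h'|[]]; last by exists (p, q).
exact: proj2_sig (cid h').
Qed.

Lemma pq_P (a d : Q) : P (pq a d).1 /\ P (pq a d).2.
Proof.
rewrite /pq; case: pselect => [h'|_]; last by split; exact: Pone.
by have [] := proj2_sig (cid h').
Qed.

Lemma PL A lam rho : Omega G A -> sc lam = rg rho -> A (comp lam rho) ->
  extendable A (comp lam rho) -> extendable A lam.
Proof.
move=> OA hlr Az extz E cE exE nE.
pose a := deg rho.
pose W := interior (rg @` E).
have [U [oU Urho injU openU]] := sc_lochomeo rho.
pose O := U `&` deg @^-1` [set a] `&` rg @^-1` W.
have nO : nbhs rho O.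
  apply: filterI; first apply: filterI.
  - by apply: open_nbhs_nbhs.
  - by apply: open_nbhs_nbhs; split => //; exact: deg_cont.
  - apply: (rg_cont (t:=G)); rewrite -hlr; exact: nbhs_interior.
have [N [nN cN NO]] := lc_nbhs nO.
have [D' D'E covD] : finite_subset_cover E (fun i : L => deg @^-1` [set deg i]) E.
  apply: (fin_cover rho cE (D := E) (f := fun i => deg @^-1` [set deg i])); first by move=> i _; exact: deg_cont.
  by move=> x Ex; exists x.
pose pd i := pq a (deg i).
pose Y := \big[setU/set0]_(i <- finmap.enum_fset D') (rg @^-1` (sc @` N) `&` deg @^-1` [set (pd i).1]).
pose Y' := \big[setU/set0]_(i <- finmap.enum_fset D') (rg @^-1` (sc @` E) `&` deg @^-1` [set (pd i).2]).
have cY : compact Y.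
  apply: big_compact => i; apply: rdp; last exact: (pq_P _ _).1.
  apply: continuous_compact => //; apply: continuous_subspaceT; exact: sc_cont.
have cY' : compact Y'.
  apply: big_compact => i; apply: rdp; last exact: (pq_P _ _).2.
  apply: continuous_compact => //; apply: continuous_subspaceT; exact: sc_cont.
pose Z0 := [set x : (L * L) * (L * L) | sc x.1.1 = rg x.1.2 /\ sc x.2.1 = rg x.2.2].
pose S := ((N `*` Y) `*` (E `*` Y')) `&`
   [set x | Z0 x /\ comp x.1.1 x.1.2 = comp x.2.1 x.2.2].
have cS : compact S.
  apply: compact_closedI; first by apply: compact_setX; apply: compact_setX.
  have wc := (wcontE _ _).1 (comp_cont (t:=G)).
  apply: closed_eqW.
  - exact: L_hausdorff.
  - have -> : Z0 = (fst @^-1` [set q : L * L | sc q.1 = rg q.2]) `&`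
                   (snd @^-1` [set q : L * L | sc q.1 = rg q.2]) by [].
    apply: closedI; apply: preimage_closed; try exact: closed_T1.
    + by move=> x _; exact: cont_fst.
    + by move=> x _; exact: cont_snd.
  - exact (@wcont_comp _ _ _ Z0 _ fst _ (wcont_cont (Z:=Z0) (@cont_fst _ _)) wc (fun (x : (L * L) * (L * L)) (h : Z0 x) => proj1 h)).
  - exact (@wcont_comp _ _ _ Z0 _ snd _ (wcont_cont (Z:=Z0) (@cont_snd _ _)) wc (fun (x : (L * L) * (L * L)) (h : Z0 x) => proj2 h)).
pose F := (fun x : (L * L) * (L * L) => x.1.2) @` S.
have cF : compact F.
  apply: continuous_compact => //; apply: continuous_subspaceT => x.
  apply: continuous_comp; [exact: cont_fst | exact: cont_snd].
have key : forall r g, N r -> sc r = rg g ->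
    exists f, [/\ F f, rg f = rg g & exists z, ple g z /\ ple f z].
  move=> r g Nr hrg.
  have [[Ur dr] Wr] := NO _ Nr.
  have drr : deg r = a by [].
  have : (rg @` E) (rg (comp r g)) by rewrite rg_comp //; exact: nbhs_singleton Wr.
  move/exE => [mu Emu [z [[h [hth ez]] [k' [hmk ez']]]]].
  have scg : sc g = rg h by rewrite -hth sc_comp.
  have ez2 : z = comp r (comp g h) by rewrite ez Defs.compA.
  have srgh : sc r = rg (comp g h) by rewrite rg_comp.
  have du : deg z = gmul a (gmul (deg g) (deg h)).
    by rewrite ez2 deg_comp // drr deg_comp.
  case: qlo => ssg _ lub.
  have qa : qle P a (deg z).
    by exists (gmul (deg g) (deg h)); [apply: ssg; exact: deg_P|].
  have qmu : qle P (deg mu) (deg z).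
    by exists (deg k'); [exact: deg_P | rewrite ez' deg_comp].
  have [l Pl [[p Pp el] [q Pq el'] lubl]] :=
    lub a (deg mu) (deg_P rho) (deg_P mu) (ex_intro2 _ _ (deg z) (deg_P z) (conj qa qmu)).
  have good : exists p q, Good a (deg mu) p q.
    exists p, q; split => //; first by rewrite -el -el'.
    by move=> u Pu h1 h2; rewrite -el; exact: lubl.
  have [Pp' Pq' ep lubp] := pq_good good.
  have [c Pc ec] := lubp (deg z) (deg_P z) qa qmu.
  have dgh : deg (comp g h) = gmul (pq a (deg mu)).1 c.
    rewrite deg_comp //; apply: (@gcancel _ a).
    by rewrite -du ec -gmulA.
  have [[f w] [[/= df dw sfw efw] _]] := Defs.factor_bij Pp' Pc dgh.
  have rgf : rg f = rg g by rewrite -(rg_comp sfw) efw rg_comp.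
  have srf : sc r = rg f by rewrite rgf.
  have drf : deg (comp r f) = gmul (deg mu) (pq a (deg mu)).2.
    by rewrite deg_comp // drr df ep.
  have [[mu' k] [[/= dmu' dk smk emk] _]] := Defs.factor_bij (deg_P mu) Pq' drf.
  have skw : sc k = rg w.
    by rewrite -(sc_comp smk) emk sc_comp.
  have ez3 : z = comp mu' (comp k w).
    by rewrite ez2 -efw Defs.compA // -emk -Defs.compA.
  have emu : mu' = mu.
    apply: (@prefix_uniq _ _ _ _ _ z _ _ dmu').
      by exists (comp k w); split => //; rewrite rg_comp.
    by exists k'.
  subst mu'.
  have [i Di dmi] := covD _ Emu.
  exists f; split.
  - exists ((r, f), (mu, k)) => //; split; last by split.
    split; split => //.
    + apply: (bigU_mem Di); split; first by exists r.
      by rewrite /= df /pd -dmi.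
    + apply: (bigU_mem Di); split; first by exists mu.
      by rewrite /= dk /pd -dmi.
  - exact: rgf.
  - exists (comp g h); split; first exact: ple_comp.
    by rewrite -efw; exact: ple_comp.
have exF : exhaustive F.
  move=> g [f0 [x Sx xf] eg].
  case: Sx => [[[Nr _] _] [[s1 _] _]].
  have hs : sc x.1.1 = rg g by rewrite s1 xf eg.
  have [f [Ff rgf [z [h1 h2]]]] := key x.1.1 g Nr hs.
  by exists f => //; exists z.
have nF : nbhs (sc rho) (rg @` F).
  pose N' := interior N `&` U.
  have oN' : open N' by apply: openI => //; exact: open_interior.
  have oS : open (sc @` N') by apply: openU => // x [].
  apply: (@filterS _ _ _ (sc @` N')).
    move=> v [r [iNr Ur] <-].
    have hs : sc r = rg (vinc (sc r)) by rewrite rg_vinc.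
    have [f [Ff rgf _]] := key r (vinc (sc r)) (interior_subset iNr) hs.
    by exists f => //; rewrite rgf rg_vinc.
  by apply: open_nbhs_nbhs; split => //; exists rho.
have nF' : nbhs (sc (comp lam rho)) (rg @` F) by rewrite sc_comp.
have [f [x Sx xf] [e Azf]] := extz F cF exF nF'.
case: Sx => [[[Nr _] [Emu _]] [[s1 s2] ecomp]].
have [[Ur _] _] := NO _ Nr.
have er : x.1.1 = rho.
  apply: injU; rewrite ?inE //.
  by rewrite s1 xf -e sc_comp.
rewrite er xf in ecomp s1.
exists x.2.1 => //.
have srf : sc rho = rg f by rewrite -e sc_comp.
have slm : sc lam = rg x.2.1 by rewrite hlr -(rg_comp srf) ecomp rg_comp.
split => //.
case: OA => _ [_ [her _]]; apply: (her _ _ Azf).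
rewrite -Defs.compA // ecomp Defs.compA //.
apply: ple_comp; by rewrite sc_comp.
Qed.

Lemma bp_invariant : G_invariant G (boundary_paths G).
Proof.
move=> A q B [OA [OB [m [n [Pm Pn _ eqs [nu0 hnu0]]]]]] [_ bB].
split => // lam Al.
have [al0 [dal0 [sal0 Aal0]]] := hnu0.
case: (OA) => _ [_ [her dir]].
have [z Az [[rho [srho ez]] [sig [ssig ez']]]] := dir _ _ Al Aal0.
pose w := comp nu0 sig.
have snus : sc nu0 = rg sig by rewrite -ssig sc_comp.
have ezw : z = comp al0 w by rewrite ez' -Defs.compA.
have saw : sc al0 = rg w by rewrite rg_comp.
have wA : Defs.shift A m w by exists al0; rewrite -ezw.
have wB : Defs.shift B n w by rewrite -eqs.
have [be [dbe [sbe Bbw]]] := wB.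
rewrite ez in Az; apply: (PL OA srho Az).
move=> E cE exE nE.
rewrite -ez in nE *.
have szw : sc z = sc w by rewrite ezw sc_comp.
have nE' : nbhs (sc (comp be w)) (rg @` E) by rewrite sc_comp // -szw.
have [mu Emu [sbm Bm]] := bB _ Bbw E cE exE nE'.
have swm : sc w = rg mu by rewrite -sbm sc_comp.
have : Defs.shift B n (comp w mu).
  exists be; split => //; split; first by rewrite rg_comp.
  by rewrite Defs.compA // rg_comp.
rewrite -eqs => -[al [dal [sal Aal]]].
have Aal' : A al by apply: (her _ _ Aal); exact: ple_comp.
have Aal0' : A al0 by apply: (her _ _ Aal0); exact: ple_comp.
have eal : al = al0 by apply: (omega_uniq OA Aal' Aal0'); rewrite dal dal0.
exists mu => //; split; first by rewrite szw.
by rewrite ezw -Defs.compA // -eal.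
Qed.

End Inv.

Theorem corollary6p17 (Q : QGroup) (P : set Q) (Lam : TopPGraph P) :
  quasi_lattice_ordered P -> rd_proper Lam ->
  closed_in_Omega Lam (boundary_paths Lam) /\ G_invariant Lam (boundary_paths Lam).
Proof.
move=> qlo rdp; split; first exact: bp_closed.
exact: bp_invariant.
Qed.
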